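(* A model of $\mathsf{Md}_\bot$ satisfies the inverse cancellation law $\mathsf{ICL}$ if and only if it satisfies the Common Inverse Law $\mathsf{CIL}$.
   Context: The signature has one sort, constants $0,1,\bot$, binary operations $+,\cdot$ and unary operations $-$ and $(\,\cdot\,)^{-1}$. $\mathsf{Md}_\bot$ is the set of equations (variables universally quantified): $(x+y)+z=x+(y+z)$; $x+y=y+x$; $x+0=x$; $x+(-x)=0\cdot x$; $(x\cdot y)\cdot z=x\cdot(y\cdot z)$; $x\cdot y=y\cdot x$; $1\cdot x=x$; $x\cdot(y+z)=x\cdot y+x\cdot z$; $-(-x)=x$; $0\cdot(x\cdot x)=0\cdot x$; $(x^{-1})^{-1}=x+0\cdot x^{-1}$; $x\cdot x^{-1}=1+0\cdot x^{-1}$; $(x\cdot y)^{-1}=x^{-1}\cdot y^{-1}$; $1^{-1}=1$; $0^{-1}=\bot$; $x+\bot=\bot$; $x\cdot\bot=\bot$. $\mathsf{ICL}$: $\forall x,y,z\,((x\neq 0\wedge x\neq\bot\wedge x^{-1}\cdot y=x^{-1}\cdot z)\rightarrow y=z)$. $\mathsf{CIL}$: $\forall x\,(x\neq 0\wedge x\neq\bot\rightarrow x\cdot x^{-1}=1)$. *)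

(* Defs.v *)
Set Implicit Arguments.

Record Sig := {
  car :> Type;
  zero : car; one : car; bot : car;
  add : car -> car -> car;
  mul : car -> car -> car;
  opp : car -> car;
  inv : car -> car
}.

Definition Md_bot (A : Sig) : Prop :=
  (forall x y z : A, add A (add A x y) z = add A x (add A y z)) /\
  (forall x y : A, add A x y = add A y x) /\
  (forall x : A, add A x (zero A) = x) /\
  (forall x : A, add A x (opp A x) = mul A (zero A) x) /\
  (forall x y z : A, mul A (mul A x y) z = mul A x (mul A y z)) /\
  (forall x y : A, mul A x y = mul A y x) /\
  (forall x : A, mul A (one A) x = x) /\
  (forall x y z : A, mul A x (add A y z) = add A (mul A x y) (mul A x z)) /\
  (forall x : A, opp A (opp A x) = x) /\
  (forall x : A, mul A (zero A) (mul A x x) = mul A (zero A) x) /\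
  (forall x : A, inv A (inv A x) = add A x (mul A (zero A) (inv A x))) /\
  (forall x : A, mul A x (inv A x) = add A (one A) (mul A (zero A) (inv A x))) /\
  (forall x y : A, inv A (mul A x y) = mul A (inv A x) (inv A y)) /\
  (inv A (one A) = one A) /\
  (inv A (zero A) = bot A) /\
  (forall x : A, add A x (bot A) = bot A) /\
  (forall x : A, mul A x (bot A) = bot A).

Definition ICL (A : Sig) : Prop :=
  forall x y z : A,
    x <> zero A -> x <> bot A ->
    mul A (inv A x) y = mul A (inv A x) z -> y = z.

Definition CIL (A : Sig) : Prop :=
  forall x : A, x <> zero A -> x <> bot A -> mul A x (inv A x) = one A.

(* Main.v *)
Require Import Defs.

Theorem mainTheorem9 (A : Sig) : Md_bot A -> (ICL A <-> CIL A).
Proof.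
  intros (aA & aC & a0 & aN & mA & mC & m1 & mD & oo & z2 & ii & xi & im & i1 & i0 & ab & mb).
  assert (Hx1 : forall u : A, mul A u (one A) = u).
  { intro u. rewrite mC. apply m1. }
  assert (Hu0 : forall u : A, add A u (mul A u (zero A)) = u).
  { intro u. transitivity (add A (mul A u (one A)) (mul A u (zero A))).
    { rewrite Hx1. reflexivity. }
    rewrite <- mD. rewrite a0. apply Hx1. }
  split.
  - intros H x Hx0 Hxb. apply (H x (mul A x (inv A x)) (one A) Hx0 Hxb).
    rewrite Hx1. rewrite xi. rewrite mD. rewrite Hx1.
    rewrite <- mA. rewrite (mC (inv A x) (zero A)). rewrite mA. rewrite z2.
    rewrite (mC (zero A) (inv A x)). apply Hu0.
  - intros H x y z Hx0 Hxb E.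
    assert (E2 : mul A x (mul A (inv A x) y) = mul A x (mul A (inv A x) z))
      by (rewrite E; reflexivity).
    rewrite <- !mA in E2. rewrite (H x Hx0 Hxb) in E2. rewrite !m1 in E2. exact E2.
Qed.
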